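(* Consider $1$-private $5$-server HSS for $\mathsf{CONCAT}_4(\mathbb{F}_2)$. (i) There is an $\mathbb{F}_2$-linear such HSS whose $\mathsf{Share}$ is $1$-private $5$-party CNF sharing over $\mathbb{F}_2$ and in which each server's output share is a single bit (download cost $5$ bits). (ii) There is no $\mathbb{F}_2$-linear such HSS in which each of the $4$ secrets in $\mathbb{F}_2$ is shared independently by $1$-private $5$-party Shamir sharing over $\mathbb{E}=\mathbb{F}_8$ (for any choice of distinct evaluation points $\alpha_0,\dots,\alpha_5\in\mathbb{F}_8$) and in which each server's output share is a single bit.
   Context: $\mathsf{CONCAT}_\ell(\mathcal{X})$: the class consisting of the identity map $\mathcal{X}^\ell\to\mathcal{X}^\ell$, with $\ell$ inputs each shared independently. A $k$-server HSS $(\mathsf{Share},\mathsf{Eval},\mathsf{Rec})$: randomized $\mathsf{Share}$ splits each input into $k$ shares; server $j$ computes its output share from its input shares; $\mathsf{Rec}$ of the output shares recovers the output with probability 1; $1$-private if each single server's input shares are distributed independently of the input. $\mathbb{F}_2$-linear: $\mathsf{Share}$ is $\mathbb{F}_2$-linear in the input and uniform random bits, output shares are vectors over $\mathbb{F}_2$, and $\mathsf{Rec}$ is $\mathbb{F}_2$-linear. $1$-private $k$-party CNF sharing of $x\in\mathbb{F}_2$: uniform $x_1,\dots,x_k\in\mathbb{F}_2$ with $\sum_ix_i=x$, party $j$ gets $(x_i)_{i\ne j}$. $1$-private Shamir sharing over $\mathbb{E}\supseteq\mathbb{F}_2$ with distinct $\alpha_0,\dots,\alpha_k\in\mathbb{E}$: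 random $p\in\mathbb{E}[X]$ with $\deg p\le1$ and $p(\alpha_0)=x$; party $j$ gets $p(\alpha_j)$. *)

(* Defs.v *)
From mathcomp Require Import all_boot all_order all_algebra all_field.
Set Implicit Arguments. Unset Strict Implicit. Unset Printing Implicit Defensive.
Import GRing.Theory.
Local Open Scope ring_scope.

(* 1-private 5-party CNF sharing: secret l is split as a l 0 + ... + a l 4 = x l;
   server j receives (a l i)_{i <> j}, indexed by k : 'I_4 via i = lift j k. *)
Definition is_cnf_sharing (x : 'I_4 -> 'F_2) (a : 'I_4 -> 'I_5 -> 'F_2) : Prop :=
  forall l : 'I_4, \sum_(i < 5) a l i = x l.

Definition cnf_share (a : 'I_4 -> 'I_5 -> 'F_2) (j : 'I_5) : 'I_4 -> 'I_4 -> 'F_2 :=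
  fun l k => a l (lift j k).

Definition F2toE (E : fieldType) (b : 'F_2) : E := (nat_of_ord b)%:R.

(* 1-private Shamir sharing over E with points alpha 0 (secret), alpha (lift 0 j) (server j):
   a polynomial p l of degree <= 1 with p(alpha_0) = x_l; server j gets p l (alpha_j). *)
Definition is_shamir_sharing (E : fieldType) (alpha : 'I_6 -> E)
    (x : 'I_4 -> 'F_2) (p : 'I_4 -> {poly E}) : Prop :=
  forall l : 'I_4, (size (p l) <= 2)%N /\ (p l).[alpha ord0] = F2toE E (x l).

Definition shamir_share (E : fieldType) (alpha : 'I_6 -> E) (p : 'I_4 -> {poly E})
    (j : 'I_5) : 'I_4 -> E :=
  fun l => (p l).[alpha (lift ord0 j)].

(* Main.v *)
Require Import Defs.
From mathcomp Require Import all_boot all_order all_algebra all_field.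
From mathcomp Require Import ring.
From Stdlib Require Import FunctionalExtensionality.
Import GRing.Theory.
Local Open Scope ring_scope.

Definition Cc (j : 'I_5) (l : 'I_4) (i : 'I_5) : 'F_2 :=
  (nat_of_bool (if (j == 4 :> nat) then (i == l :> nat)
   else ((l == j :> nat) && (i != j)) (+) ((i == l :> nat) && (l != j :> nat))))%:R.

Definition Rm : 'M['F_2]_(5, 4) := \matrix_(j < 5, l < 4) (nat_of_bool ((j == l :> nat) || (j == 4 :> nat)))%:R.

Definition Ev (j : 'I_5) (bb : 'I_4 -> 'I_4 -> 'F_2) : 'F_2 :=
  \sum_(l < 4) \sum_(k < 4) Cc j l (lift j k) * bb l k.

Lemma Cc_jj j l : Cc j l j = 0.
Proof.
rewrite /Cc; case: ifP => [/eqP Hj|_]; last first.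
  rewrite eqxx andbF /=; case: (@eqP _ (nat_of_ord j) (nat_of_ord l)) => [E|] //=.
  rewrite E eqxx /=; exact: mulr0n.
rewrite Hj; case: l => [[|[|[|[|]]]] ?] //=; rewrite mulr0n.

Qed.

Lemma coef l i l0 : \sum_(j < 5) Cc j l i * Rm j l0 = ((l == l0) : nat)%:R.
Proof.
rewrite !big_ord_recr big_ord0 /= /Cc /Rm !mxE /=.
case: l => [[|[|[|[|//]]]] ?]; case: i => [[|[|[|[|[|//]]]]] ?];
   case: l0 => [[|[|[|[|//]]]] ?]; apply/eqP; vm_compute; reflexivity.
Qed.

Lemma part1 : exists (Eval : forall j : 'I_5, ('I_4 -> 'I_4 -> 'F_2) -> 'F_2)
          (R : 'M['F_2]_(5, 4)),
      forall (x : 'I_4 -> 'F_2) (a : 'I_4 -> 'I_5 -> 'F_2),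
        is_cnf_sharing x a ->
        (\row_(j < 5) Eval j (cnf_share a j)) *m R = \row_(l < 4) x l.
Proof.
exists Ev, Rm => x a Ha; apply/rowP => l0; rewrite !mxE -Ha.
have Ev_eq : forall j, Ev j (cnf_share a j) = \sum_l \sum_(i < 5) Cc j l i * a l i.
  move=> j; apply: eq_bigr => l _.
  by rewrite (bigD1_ord j) //= Cc_jj mul0r add0r.
transitivity (\sum_j \sum_l \sum_(i < 5) Cc j l i * a l i * Rm j l0).
  apply: eq_bigr => j _; rewrite mxE Ev_eq mulr_suml; apply: eq_bigr => l _.
  by rewrite mulr_suml.
rewrite exchange_big /=.
transitivity (\sum_l \sum_(i<5) ((l == l0) : nat)%:R * a l i).
  apply: eq_bigr => l _; rewrite exchange_big /=; apply: eq_bigr => i _.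
  rewrite -(coef l i l0) mulr_suml.
  rewrite [RHS](eq_bigr (fun j => Cc j l i * a l i * Rm j l0)) // => j _.
  by rewrite mulrAC.
rewrite [LHS](bigD1 l0) //= [X in _ + X]big1 ?addr0.
  by apply: eq_bigr => i _; rewrite eqxx mul1r.
by move=> l /negbTE Hl; apply: big1 => i _; rewrite Hl mul0r.
Qed.


Lemma cV_lift_delta (K : nzRingType) n (z : 'cV[K]_n.+1) j :
  (forall i, z (lift j i) 0 = 0) -> z = z j 0 *: delta_mx j 0.
Proof.
move=> H; apply/matrixP => i k; rewrite (ord1 k) !mxE eqxx andbT.
case: (unliftP j i) => [i' ->| ->]; first by rewrite H eq_sym (negbTE (neq_lift _ _)) mulr0.
by rewrite eqxx mulr1.
Qed.

Lemma sum_sdelta (K : nzRingType) n (F : 'I_n -> K) j v :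
  \sum_i F i * (v *: delta_mx j 0 : 'cV[K]_n) i 0 = F j * v.
Proof.
rewrite (bigD1 j) //= !mxE !eqxx mulr1 big1 ?addr0 // => i /negbTE Hi.
by rewrite !mxE Hi mulr0 mulr0.
Qed.

Lemma sum_ind (K : nzRingType) n (F : 'I_n -> K) l :
  \sum_i ((i == l) : nat)%:R * F i = F l.
Proof.
rewrite (bigD1 l) //= eqxx mul1r big1 ?addr0 // => i /negbTE -> ; by rewrite mul0r.
Qed.

Lemma sum_2delta (K : nzRingType) n (F : 'I_n -> K) j1 j2 :
  \sum_i F i * (delta_mx j1 0 + delta_mx j2 0 : 'cV[K]_n) i 0 = F j1 + F j2.
Proof.
rewrite (eq_bigr (fun i => F i * (1 *: delta_mx j1 0 : 'cV[K]_n) i 0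
   + F i * (1 *: delta_mx j2 0 : 'cV[K]_n) i 0)); last first.
  by move=> i _; rewrite !scale1r [in LHS]mxE mulrDr.
rewrite big_split /= !sum_sdelta; congr (_ + _); exact: mulr1.
Qed.

Lemma F2toE0 (E : fieldType) : F2toE E 0 = 0.
Proof. by []. Qed.

Lemma part2 (E : finFieldType) (cardE : #|E| = 8%N) (alpha : 'I_6 -> E)
  (injA : injective alpha) (Eval : forall j : 'I_5, ('I_4 -> E) -> 'F_2)
  (R : 'M['F_2]_(5, 4))
  (H : forall (x : 'I_4 -> 'F_2) (p : 'I_4 -> {poly E}),
          is_shamir_sharing alpha x p ->
          (\row_(j < 5) Eval j (shamir_share alpha p j)) *m R = \row_(l < 4) x l) :
  False.
Proof.
pose b (j : 'I_5) := alpha (lift ord0 j) - alpha ord0.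
have bnz : forall j, b j != 0.
  move=> j; rewrite subr_eq0; apply/eqP => /injA Hj.
  by move: (neq_lift ord0 j); rewrite Hj eqxx.
pose sh (j : 'I_5) (x : 'I_4 -> 'F_2) (s : 'I_4 -> E) := fun l => F2toE E (x l) + s l * b j.
have H1 : forall x s, (\row_j Eval j (sh j x s)) *m R = \row_l x l.
  move=> x s.
  pose p := fun l => (F2toE E (x l))%:P + (s l)%:P * ('X - (alpha ord0)%:P).
  have -> : (\row_j Eval j (sh j x s)) = \row_j Eval j (shamir_share alpha p j).
    apply/rowP => j; rewrite !mxE; congr (Eval j _); apply: functional_extensionality => l.
    by rewrite /shamir_share /p /sh !hornerE.
  apply: H => l; split; last by rewrite /p !hornerE subrr mulr0 addr0.
  rewrite /p (leq_trans (size_polyD _ _)) // geq_max size_polyC; apply/andP; split; first by case: (_ != 0).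
  apply: leq_trans (size_mul_leq _ _) _; rewrite size_XsubC size_polyC.
  by case: (_ != 0).
have H2 : forall (c : 'cV['F_2]_4) (x : 'I_4 -> 'F_2) (s : 'I_4 -> E), \sum_j Eval j (sh j x s) * (R *m c) j 0 = \sum_l x l * c l 0.
  move=> c x s; have := congr1 (fun M => (M *m c) 0 0) (H1 x s).
  rewrite /= -mulmxA !mxE => E1.
  transitivity (\sum_j (\row_j Eval j (sh j x s)) 0 j * (R *m c) j 0).
    by apply: eq_bigr => j _; rewrite mxE.
  rewrite E1; apply: eq_bigr => l _; by rewrite mxE.
have HA : forall (c : 'cV['F_2]_4) (j : 'I_5) (v : 'F_2), R *m c = v *: delta_mx j 0 -> c = 0.
  move=> c j v Hc; apply/matrixP => l z; rewrite (ord1 z) mxE {z}.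
  pose x := fun l' : 'I_4 => ((l' == l) : nat)%:R : 'F_2.
  pose s' := fun l' => F2toE E (x l') / b j.
  have e1 := H2 c x (fun _ => 0).
  have e2 := H2 c (fun _ => 0) s'.
  rewrite Hc !sum_sdelta sum_ind in e1 e2.
  rewrite -e1.
  have -> : sh j x (fun _ => 0) = sh j (fun _ => 0) s'.
    apply: functional_extensionality => l'.
    by rewrite /sh /s' mul0r addr0 F2toE0 add0r divfK.
  rewrite e2; apply: big1 => i _; by rewrite mul0r.
have HE : forall k : 'I_4, exists c : 'cV['F_2]_4,
    R *m c = delta_mx ord0 0 + delta_mx (lift ord0 k) 0.
  move=> k; set j := lift ord0 k.
  pose P := fun c : 'cV['F_2]_4 => \col_i (R *m c) (lift j i) 0.
  have Pinj : injective P.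
    move=> c1 c2 e12; apply/eqP; rewrite -subr_eq0; apply/eqP.
    set z := R *m (c1 - c2).
    apply: (HA _ j (z j 0)); rewrite -(@cV_lift_delta _ _ z) // => i.
    have := congr1 (fun M : 'cV['F_2]_4 => M i 0) e12; rewrite /P !mxE => e.
    rewrite (eq_bigr (fun j0 => R (lift j i) j0 * c1 j0 0 - R (lift j i) j0 * c2 j0 0)); last by move=> j0 _; rewrite !mxE mulrBr.
    by rewrite sumrB e subrr.
  have [g Pg gP] := injF_bij Pinj.
  set t := \col_i (delta_mx ord0 0 : 'cV['F_2]_5) (lift j i) 0.
  exists (g t).
  set z := R *m g t - delta_mx ord0 0.
  have Hz : z = z j 0 *: delta_mx j 0.
    apply: cV_lift_delta => i.
    have := congr1 (fun M : 'cV['F_2]_4 => M i 0) (gP t); rewrite /P /t !mxE => e.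
    by rewrite /t e subrr.
  have zj : z j 0 = 1.
    have : z j 0 != 0.
      apply/negP => /eqP z0; move: Hz; rewrite z0 scale0r /z => /eqP; rewrite subr_eq0 => /eqP e.
      have := HA (g t) ord0 1; rewrite scale1r => /(_ e) g0.
      by move: e; rewrite g0 mulmx0 => /matrixP /(_ ord0 ord0); rewrite !mxE.
    move: (z j 0) => v.
    by case: v => [[|[|//]]] Hv //= _; apply/val_inj.
  move: Hz; rewrite zj scale1r /z => /eqP; rewrite subr_eq => /eqP ->.
  by rewrite addrC.
have [cf Hcf] := fin_all_exists HE.
pose d (k : 'I_4) := 1 - b ord0 / b (lift ord0 k).
have key : forall k (v : 'I_4 -> E) (x : 'I_4 -> 'F_2),
    Eval ord0 (fun l => v l + d k * F2toE E (x l)) = Eval ord0 v + \sum_l x l * cf k l 0.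
  move=> k v x; set j := lift ord0 k.
  pose s2 := fun l => v l / b ord0.
  pose s1 := fun l => s2 l - F2toE E (x l) / b j.
  have e1 := H2 (cf k) x s1.
  have e2 := H2 (cf k) (fun _ => 0) s2.
  rewrite Hcf !sum_2delta in e1 e2.
  have q1 : sh j x s1 = sh j (fun _ => 0) s2.
    apply: functional_extensionality => l; rewrite /sh /s1 /s2 F2toE0.
    by field; rewrite ?bnz.
  have q2 : sh ord0 (fun _ => 0) s2 = v.
    apply: functional_extensionality => l; rewrite /sh /s2 F2toE0.
    by field; rewrite ?bnz.
  have q3 : sh ord0 x s1 = fun l => v l + d k * F2toE E (x l).
    apply: functional_extensionality => l; rewrite /sh /s1 /s2 /d.
    by field; rewrite ?bnz.
  rewrite q1 q3 in e1; rewrite q2 big1 in e2; last by move=> i _; rewrite mul0r.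
  apply: (addIr (Eval j (sh j (fun _ => 0) s2))).
  by rewrite e1 addrAC e2 add0r.
pose vec (l : 'I_4) (e : E) := fun l' : 'I_4 => if l' == l then e else 0.
have step : forall l (a : {ffun 'I_4 -> 'F_2}) k e,
    Eval ord0 (vec l (F2toE E (a k) * d k + e)) = Eval ord0 (vec l e) + a k * cf k l 0.
  move=> l a k e.
  have := key k (vec l e) (fun l' => if l' == l then a k else 0).
  have -> : (fun l0 => vec l e l0 + d k * F2toE E (if l0 == l then a k else 0))
          = vec l (F2toE E (a k) * d k + e).
    apply: functional_extensionality => l'; rewrite /vec.
    by case: (l' == l); rewrite ?F2toE0 ?mulr0 ?addr0 // addrC mulrC.
  move=> ->; congr (_ + _).
  rewrite (bigD1 l) //= eqxx big1 ?addr0 // => i /negbTE ->; by rewrite mul0r.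
have chain : forall l (a : {ffun 'I_4 -> 'F_2}),
    Eval ord0 (vec l (\sum_k F2toE E (a k) * d k))
      = Eval ord0 (vec l 0) + \sum_k a k * cf k l 0.
  move=> l a.
  apply: (big_rec2 (fun e z => Eval ord0 (vec l e) = Eval ord0 (vec l 0) + z)).
    by rewrite addr0.
  move=> k e z _ IH.
  by rewrite step IH -addrA [z + _]addrC.
pose f (a : {ffun 'I_4 -> 'F_2}) := \sum_k F2toE E (a k) * d k.
have finj : injective f.
  move=> a a' faa.
  have hl : forall l, \sum_k a k * cf k l 0 = \sum_k a' k * cf k l 0.
    move=> l; apply: (@addrI _ (Eval ord0 (vec l 0))).
    by rewrite -!chain -/(f a) -/(f a') faa.
  pose C := \sum_k (a k - a' k) *: cf k.
  have C0 : C = 0.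
    apply/matrixP => l z; rewrite (ord1 z) summxE mxE.
    transitivity (\sum_k (a k * cf k l 0 - a' k * cf k l 0)).
      by apply: eq_bigr => k _; rewrite mxE mulrBl.
    by rewrite sumrB hl subrr.
  have RC : R *m C = \sum_k (a k - a' k) *: (delta_mx ord0 0 + delta_mx (lift ord0 k) 0).
    rewrite /C mulmx_sumr; apply: eq_bigr => k _; by rewrite -scalemxAr Hcf.
  apply/ffunP => k0.
  have := congr1 (fun M : 'cV['F_2]_5 => M (lift ord0 k0) 0) RC.
  rewrite /= C0 mulmx0 summxE mxE.
  rewrite (bigD1 k0) //= big1; last first.
    move=> k /negbTE Hk; rewrite !mxE eq_sym (negbTE (neq_lift _ _)).
    by rewrite (inj_eq lift_inj) eq_sym Hk /= addr0 mulr0.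
  rewrite !mxE eq_sym (negbTE (neq_lift _ _)) !eqxx /= add0r addr0.
  have -> : ((true && true)%:R : 'F_2) = 1 by [].
  rewrite mulr1.
  by move/eqP; rewrite eq_sym subr_eq0 => /eqP.
have := leq_card f finj.
by rewrite card_ffun card_Fp // card_ord cardE.
Qed.

Theorem mainTheorem19 :
  (* (i) CNF sharing, 1-bit output shares, F_2-linear reconstruction *)
  (exists (Eval : forall j : 'I_5, ('I_4 -> 'I_4 -> 'F_2) -> 'F_2)
          (R : 'M['F_2]_(5, 4)),
      forall (x : 'I_4 -> 'F_2) (a : 'I_4 -> 'I_5 -> 'F_2),
        is_cnf_sharing x a ->
        (\row_(j < 5) Eval j (cnf_share a j)) *m R = \row_(l < 4) x l)
  /\
  (* (ii) Shamir sharing over F_8, any distinct points: impossible *)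
  (forall (E : finFieldType), #|E| = 8%N ->
   forall alpha : 'I_6 -> E, injective alpha ->
   ~ (exists (Eval : forall j : 'I_5, ('I_4 -> E) -> 'F_2)
             (R : 'M['F_2]_(5, 4)),
        forall (x : 'I_4 -> 'F_2) (p : 'I_4 -> {poly E}),
          is_shamir_sharing alpha x p ->
          (\row_(j < 5) Eval j (shamir_share alpha p j)) *m R = \row_(l < 4) x l)).
Proof.
split; first exact: part1.
move=> E cardE alpha injA [Eval [R H]].
exact: (@part2 E cardE alpha injA Eval R H).
Qed.
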